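(* Let $G$ be a connected twin-free bipartite graph of order $n \ge 2$. Then $i_{\max}(G) \ge \lceil n/2\rceil+1$, and this inequality is sharp.
   Context: $i_{\max}(G)$ denotes the number of maximal independent sets of $G$. A graph is twin-free if no two vertices have the same open neighbourhood. *)

(* Defs.v *)
From mathcomp Require Import all_boot.
Set Implicit Arguments. Unset Strict Implicit. Unset Printing Implicit Defensive.

Section Graphs.
Variable T : finType.
Variable e : rel T.

Definition simple_graph : Prop := symmetric e /\ irreflexive e.

Definition independent (S : {set T}) : bool :=
  [forall x in S, forall y in S, ~~ e x y].

Definition maximal_independent (S : {set T}) : bool :=
  independent S && [forall S' : {set T}, (S \proper S') ==> ~~ independent S'].

Definition imax : nat := #|[set S : {set T} | maximal_independent S]|.

Definition connected_graph : Prop := forall x y : T, connect e x y.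

Definition bipartite : Prop :=
  exists A : {set T}, forall x y : T, e x y -> (x \in A) != (y \in A).

Definition twin_free : Prop :=
  forall x y : T, (forall z : T, e x z = e y z) -> x = y.
End Graphs.

(* Main.v *)
Require Import Defs.
From mathcomp Require Import all_boot zify.
Set Implicit Arguments. Unset Strict Implicit. Unset Printing Implicit Defensive.

Section Gen.
Variable T : finType.
Variable e : rel T.
Hypothesis esym : symmetric e.
Hypothesis eirr : irreflexive e.

Lemma indepE (S : {set T}) :
  independent e S -> forall x y, x \in S -> y \in S -> e x y = false.
Proof.
move=> /forallP H x y xS yS; apply/negbTE.
by move: (H x) => /implyP /(_ xS) /forallP /(_ y) /implyP /(_ yS).
Qed.

Lemma indepI (S : {set T}) :
  (forall x y, x \in S -> y \in S -> e x y = false) -> independent e S.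
Proof.
move=> H; apply/forallP => x; apply/implyP => xS; apply/forallP => y.
by apply/implyP => yS; rewrite H.
Qed.

Lemma mis_indep S : maximal_independent e S -> independent e S.
Proof. by case/andP. Qed.

Lemma mis_dom S : maximal_independent e S ->
  forall x, x \notin S -> exists2 y, y \in S & e x y.
Proof.
case/andP=> iS /forallP mS x xS.
have [h|h] := boolP [exists y in S, e x y].
  by case/exists_inP: h => y ??; exists y.
have P : S \proper x |: S.
  by apply/properP; split; [apply: subsetUr | exists x; rewrite ?setU11].
have I : independent e (x |: S).
  apply: indepI => u v; rewrite !in_setU1.
  case/orP=> [/eqP->|uS]; case/orP=> [/eqP->|vS].
  - by rewrite eirr.
  - by apply/negbTE; apply: contra h => h; apply/exists_inP; exists v.
  - by rewrite esym; apply/negbTE; apply: contra h => h; apply/exists_inP; exists u.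
  - exact: indepE iS _ _ uS vS.
by move: (mS (x |: S)); rewrite P I.
Qed.

Lemma misI S : independent e S ->
  (forall x, x \notin S -> exists2 y, y \in S & e x y) -> maximal_independent e S.
Proof.
move=> iS dS; apply/andP; split=> //; apply/forallP => S'; apply/implyP.
case/properP=> sub [x xS' xS]; have [y yS exy] := dS x xS.
apply/negP => iS'; have := indepE iS' xS' (subsetP sub y yS); by rewrite exy.
Qed.

Definition nb (a : T) : {set T} := [set y | e a y].

Variable A : {set T}.
Hypothesis bip : forall x y, e x y -> (x \in A) != (y \in A).

Lemma bipA x y : e x y -> x \in A -> y \notin A.
Proof. by move=> /bip; case: (x \in A); case: (y \in A). Qed.
Lemma bipB x y : e x y -> x \notin A -> y \in A.
Proof. by move=> /bip; case: (x \in A); case: (y \in A). Qed.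

Definition fS (a : T) : {set T} :=
  [set x | if x \in A then [forall y, ((y \notin A) && ~~ e a y) ==> ~~ e x y]
           else ~~ e a x].

Lemma lowerA : twin_free e -> (forall x, exists y, e x y) -> #|A|.+1 <= imax e.
Proof.
move=> tw hn.
have fSa : forall a, a \in A -> a \in fS a.
  move=> a aA; rewrite inE aA; apply/forallP => y; apply/implyP; by case/andP.
have mis : forall a, a \in A -> maximal_independent e (fS a).
  move=> a aA; apply: misI.
    have key : forall x y, x \in fS a -> y \in fS a -> x \in A -> y \notin A -> e x y = false.
      move=> x y; rewrite !inE => + + xA yA; rewrite xA (negbTE yA) => /forallP /(_ y).
      by rewrite yA /= => /implyP H /H /negbTE.
    apply: indepI => x y xS yS; apply/negbTE/negP => exy.
    case: (boolP (x \in A)) => xA.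
      by move: (key x y xS yS xA (bipA exy xA)); rewrite exy.
    have yA := bipB exy xA.
    by move: (key y x yS xS yA xA); rewrite esym exy.
  move=> x; rewrite inE; case: (boolP (x \in A)) => xA.
    rewrite negb_forall => /existsP [y]; rewrite negb_imply negbK => /andP [/andP [yA nay] exy].
    by exists y => //; rewrite inE (negbTE yA).
  by rewrite negbK => eax; exists a; [exact: fSa | rewrite esym].
have misB : maximal_independent e (~: A).
  apply: misI.
    apply: indepI => x y; rewrite !inE => xA yA; apply/negbTE; apply/negP => exy.
    by move: (bipB exy xA); rewrite (negbTE yA).
  move=> x; rewrite inE negbK => xA; have [y exy] := hn x.
  by exists y; rewrite // inE (bipA exy xA).
have finj : {in A &, injective fS}.
  move=> a a' aA a'A eq; apply: tw => z.
  case: (boolP (z \in A)) => zA.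
    case: (boolP (e a z)) => h; first by move: (bipA h aA); rewrite zA.
    case: (boolP (e a' z)) => h'; first by move: (bipA h' a'A); rewrite zA.
    by [].
  have : (z \in fS a) = (z \in fS a') by rewrite eq.
  by rewrite !inE (negbTE zA) => /negb_inj.
have sub : ~: A |: (fS @: A) \subset [set S | maximal_independent e S].
  apply/subsetP => S; rewrite in_setU1 inE => /orP [/eqP-> //|].
  by case/imsetP => a aA ->; apply: mis.
rewrite /imax; apply: leq_trans (subset_leq_card sub).
rewrite cardsU1 card_in_imset //.
have -> : (~: A \notin fS @: A) = true.
  apply/negP => /imsetP [a aA eq]; by move: (fSa a aA); rewrite -eq inE aA.
by [].
Qed.

Lemma upperA : (forall S, maximal_independent e S ->
     S :&: ~: A = ~: A \/ exists2 a, a \in A & S :&: ~: A = ~: A :\: nb a) ->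
  imax e <= #|A|.+1.
Proof.
move=> H.
set M := [set S | maximal_independent e S].
have charA : forall S, S \in M -> forall x, x \in A ->
    (x \in S) = [forall y in S :&: ~: A, ~~ e x y].
  move=> S; rewrite inE => mS x xA; apply/idP/idP.
    move=> xS; apply/forall_inP => y; rewrite inE => /andP [yS _].
    by rewrite (indepE (mis_indep mS) xS yS).
  move=> /forall_inP Hf; apply/negPn/negP => xS.
  have [y yS exy] := mis_dom mS xS.
  by move: (Hf y); rewrite !inE yS (bipA exy xA) exy => /(_ isT).
have ginj : {in M &, injective (fun S => S :&: ~: A)}.
  move=> S1 S2 m1 m2 eq; apply/setP => x.
  case: (boolP (x \in A)) => xA.
    by rewrite (charA _ m1 _ xA) (charA _ m2 _ xA) eq.
  have : (x \in S1 :&: ~: A) = (x \in S2 :&: ~: A) by rewrite eq.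
  by rewrite !inE xA !andbT.
rewrite /imax -/M -(card_in_imset ginj).
have sub : [set S :&: ~: A | S in M] \subset ~: A |: [set ~: A :\: nb a | a in A].
  apply/subsetP => Y /imsetP [S mS ->]; rewrite inE in mS.
  case: (H S mS) => [-> |[a aA ->]]; first by rewrite setU11.
  by rewrite in_setU1; apply/orP; right; apply/imsetP; exists a.
apply: leq_trans (subset_leq_card sub) _.
apply: leq_trans (leq_card_setU _ _) _.
by rewrite cards1 add1n ltnS leq_imset_card.
Qed.

Lemma intentT (t : T) S : maximal_independent e S ->
  (forall y, y \notin A -> y \in S -> ~~ e t y) ->
  (forall z y, z \in S -> z \in A -> e z y -> e t y) ->
  S :&: ~: A = ~: A :\: nb t.
Proof.
move=> mS h1 h2; apply/setP => y; rewrite !inE.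
case: (boolP (y \in A)) => yA; first by rewrite !andbF.
rewrite !andbT; apply/idP/idP; first exact: h1.
move=> nty; apply/negPn/negP => yS.
have [z zS eyz] := mis_dom mS yS.
by move: (h2 z y zS (bipB eyz yA)); rewrite esym eyz (negbTE nty) => /(_ isT).
Qed.

Lemma intentB S : maximal_independent e S -> (forall z, z \in S -> z \notin A) ->
  S :&: ~: A = ~: A.
Proof.
move=> mS h; apply/setP => y; rewrite !inE.
case: (boolP (y \in A)) => yA; first by rewrite !andbF.
rewrite !andbT; apply/negPn/negP => yS.
have [z zS eyz] := mis_dom mS yS.
by move: (h z zS); rewrite (bipB eyz yA).
Qed.

End Gen.

Lemma part1 (T : finType) (e : rel T) :
  simple_graph e -> connected_graph e -> bipartite e -> twin_free e ->
  2 <= #|T| -> (#|T|.+1 %/ 2).+1 <= imax e.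
Proof.
move=> [esym eirr] con [A bip] tw n2.
have hn : forall x, exists y, e x y.
  move=> x.
  have [y xy] : exists y, y != x.
    have : 1 < #|T| by [].
    rewrite (cardD1 x) ltnS lt0n => /pred0Pn [y]; rewrite inE => /andP [yx _].
    by exists y.
  case/connectP: (con x y) => [[|z p]] /= ; first by move=> _ eq; rewrite eq eqxx in xy.
  by case/andP => exz _ _; exists z.
have bipC : forall x y, e x y -> (x \in ~: A) != (y \in ~: A).
  by move=> x y /bip; rewrite !inE; case: (x \in A); case: (y \in A).
have h1 := lowerA esym bip tw hn.
have h2 := lowerA esym bipC tw hn.
have := cardsC A.
lia.
Qed.
Definition adj (k u v : nat) : bool :=
  ((u < k) && (k <= v) && (v < 2*k) && (u + k <= v)) ||
  ((u == 2*k) && (k <= v) && (v.+1 < 2*k)).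

Section Con.
Variables n k : nat.
Hypothesis hnk : (n = 2*k /\ 1 <= k) \/ (n = 2*k+1 /\ 2 <= k).

Definition E : rel 'I_n := fun u v => adj k u v || adj k v u.
Definition Aset : {set 'I_n} := [set u : 'I_n | (nat_of_ord u < k) || (nat_of_ord u == 2*k)].

Lemma E_sym : symmetric E.
Proof. by move=> u v; rewrite /E orbC. Qed.

Lemma E_irr : irreflexive E.
Proof. move=> u; rewrite /E /adj; lia. Qed.

Lemma E_bip : forall x y, E x y -> (x \in Aset) != (y \in Aset).
Proof.
move=> x y; rewrite !inE /E /adj; have := ltn_ord x; have := ltn_ord y.
case: (boolP ((nat_of_ord x < k) || (nat_of_ord x == 2*k)));
case: (boolP ((nat_of_ord y < k) || (nat_of_ord y == 2*k))) => //=; lia.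
Qed.

Lemma E_con : connected_graph E.
Proof.
have n0 : 0 < n by lia.
pose o := Ordinal n0.
have ho : forall u, connect E u o.
  move=> u; have := ltn_ord u.
  case: (ltnP (nat_of_ord u) k) => hu.
    have wl : 2*k-1 < n by lia.
    move=> _; apply: connect_trans (connect1 (_ : E u (Ordinal wl))) _.
      rewrite /E /adj /=. lia.
    apply: connect1; rewrite /E /adj /=; lia.
  case: (ltnP (nat_of_ord u) (2*k)) => hu2 hun.
    apply: connect1; rewrite /E /adj /=; lia.
  have wl : k < n by lia.
  apply: connect_trans (connect1 (_ : E u (Ordinal wl))) _.
    rewrite /E /adj /=; lia.
  apply: connect1; rewrite /E /adj /=; lia.
move=> x y; apply: connect_trans (ho x) _.
by rewrite (sym_connect_sym (@E_sym)); apply: ho.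
Qed.

Lemma E_tw : twin_free E.
Proof.
move=> x y H.
have Hn : forall z (hz : z < n), E x (Ordinal hz) = E y (Ordinal hz) by move=> z hz; apply: H.
have hx := ltn_ord x; have hy := ltn_ord y.
apply/val_inj/eqP; apply/negP => /negP nxy.
wlog lt : x y H Hn hx hy nxy / nat_of_ord x < nat_of_ord y.
  move=> W; case: (ltngtP (nat_of_ord x) (nat_of_ord y)) => h.
  - exact: W h.
  - apply: (W y x) => //; try (by move=> z; rewrite H); try (by move=> z hz; rewrite Hn); by rewrite eq_sym.
  - by apply: (negP nxy); apply/eqP; apply: h.
have key : forall z (hz : z < n), E x (Ordinal hz) -> ~~ E y (Ordinal hz) -> False.
  by move=> z hz h1; rewrite -Hn h1.
have key2 : forall z (hz : z < n), E y (Ordinal hz) -> ~~ E x (Ordinal hz) -> False.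
  by move=> z hz h1; rewrite Hn h1.
clear H Hn nxy.
case: (ltnP (nat_of_ord x) k) => hxk.
  case: (ltnP (nat_of_ord y) k) => hyk.
    have hz : k + nat_of_ord x < n by lia.
    apply: (key _ hz); rewrite /E /adj /=; lia.
  have hz : 2*k - 1 < n by lia.
  apply: (key _ hz); rewrite /E /adj /=; lia.
case: (ltnP (nat_of_ord y) (2*k)) => hyk.
  have hz : nat_of_ord y - k < n by lia.
  apply: (key2 _ hz); rewrite /E /adj /=; lia.
have hz : k < n by lia.
apply: (key2 _ hz); rewrite /E /adj /=; lia.
Qed.

Lemma inA (u : 'I_n) : (u \in Aset) = ((nat_of_ord u < k) || (nat_of_ord u == 2*k)).
Proof. by rewrite inE. Qed.

Lemma E_char S : maximal_independent E S ->
  S :&: ~: Aset = ~: Aset \/ exists2 a, a \in Aset & S :&: ~: Aset = ~: Aset :\: nb E a.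
Proof.
move=> mS.
have iS := mis_indep mS.
have n0 : 0 < n by lia.
case: (boolP [exists u in S, nat_of_ord u < k]) => [/exists_inP [u1 u1S u1k] | /exists_inPn noA].
  have P1 : [pred u : 'I_n | (u \in S) && (nat_of_ord u < k)] u1 by rewrite /= u1S.
  case: (arg_minnP (fun u : 'I_n => nat_of_ord u) P1) => u0 /andP [u0S u0k] u0min.
  case: (boolP [exists w in S, nat_of_ord w == 2*k]) => [/exists_inP [w wS /eqP wk] | /exists_inPn noC].
    right; exists (Ordinal n0); first by rewrite inA /=; lia.
    apply: (intentT E_sym E_irr E_bip) => //.
      move=> y yA yS; apply/negP => _; have := ltn_ord y; move: yA; rewrite inA => yA.
      case: (ltnP (nat_of_ord y).+1 (2*k)) => hy.
        have := indepE iS wS yS; rewrite /E /adj; lia.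
      have := indepE iS u0S yS; rewrite /E /adj; lia.
    move=> z y zS zA ezy; have := bipA E_bip ezy zA.
    rewrite inA /E /adj /=; have := ltn_ord y; lia.
  right; exists u0; first by rewrite inA u0k.
  apply: (intentT E_sym E_irr E_bip) => //.
    by move=> y _ yS; rewrite (indepE iS u0S yS).
  move=> z y zS zA ezy; have := noC z zS; have := u0min z; rewrite /= zS /=.
  move: zA ezy; rewrite inA /E /adj; have := ltn_ord y; have := ltn_ord z; lia.
case: (boolP [exists w in S, nat_of_ord w == 2*k]) => [/exists_inP [w wS /eqP wk] | /exists_inPn noC].
  right; exists w; first by rewrite inA wk eqxx orbT.
  apply: (intentT E_sym E_irr E_bip) => //.
    by move=> y _ yS; rewrite (indepE iS wS yS).
  move=> z y zS zA ezy.
  have zw : z = w.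
    apply: val_inj; move: zA (noA z zS); rewrite inA /=; lia.
  by rewrite -zw.
left; apply: (intentB E_sym E_irr E_bip) => // z zS; rewrite inA.
have := noA z zS; have := noC z zS; lia.
Qed.

Lemma card_A : #|Aset| = n.+1 %/ 2.
Proof.
have le : k <= n by lia.
have c1 : #|[set u : 'I_n | nat_of_ord u < k]| = k.
  have -> : [set u : 'I_n | nat_of_ord u < k] = [set widen_ord le i | i in 'I_k].
    apply/setP => u; rewrite inE; apply/idP/imsetP.
      by move=> h; exists (Ordinal h) => //; apply: val_inj.
    by case=> i _ ->; rewrite /= ltn_ord.
  by rewrite card_imset ?card_ord //; by move=> i j /(congr1 val) /= h; apply: val_inj.
case: hnk => [[hn hk]|[hn hk]].
  have -> : Aset = [set u : 'I_n | nat_of_ord u < k].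
    apply/setP => u; rewrite !inE; have := ltn_ord u; lia.
  rewrite c1; lia.
have wl : 2*k < n by lia.
have -> : Aset = Ordinal wl |: [set u : 'I_n | nat_of_ord u < k].
  apply/setP => u; rewrite !inE; have := ltn_ord u.
  case: (boolP (u == Ordinal wl)) => [/eqP -> /=| h] /=; first by rewrite eqxx orbT.
  have : nat_of_ord u != 2*k by apply: contra h => /eqP h; apply/eqP/val_inj.
  lia.
rewrite cardsU1 c1 inE /=; lia.
Qed.

End Con.

(* ceil(n/2) is written n.+1 %/ 2. *)
Theorem theorem1p3 :
  (forall (T : finType) (e : rel T),
      simple_graph e -> connected_graph e -> bipartite e -> twin_free e ->
      2 <= #|T| ->
      (#|T|.+1 %/ 2).+1 <= imax e)
  /\
  (forall n : nat, 2 <= n -> n != 3 ->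
      exists e : rel 'I_n,
        [/\ simple_graph e, connected_graph e, bipartite e, twin_free e &
            imax e = (n.+1 %/ 2).+1]).
Proof.
split; first exact: part1.
move=> n n2 n3.
set k := n./2.
have hnk : (n = 2*k /\ 1 <= k) \/ (n = 2*k+1 /\ 2 <= k).
  have := odd_double_half n; rewrite -/k -mul2n; case: (odd n) => /=; lia.
have sg : simple_graph (@E n k) by split; [exact: E_sym | exact: E_irr].
have bp : bipartite (@E n k) by exists (Aset n k); move=> x y; exact: E_bip.
exists (@E n k); split.
- exact: sg.
- exact: E_con hnk.
- exact: bp.
- exact: E_tw hnk.
have up : imax (@E n k) <= #|Aset n k|.+1.
  apply: (upperA (E_sym _) (E_irr hnk) (E_bip hnk)) => S mS; exact: (E_char hnk mS).
have lo := part1 sg (E_con hnk) bp (E_tw hnk).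
rewrite (card_A hnk) in up.
apply/eqP; rewrite eqn_leq up /=; move: lo; rewrite card_ord; apply; exact: n2.
Qed.
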